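(* Let $f$ be a holomorphic quadratic self-map of $\mathbb{P}^2$ with an invariant line $\ell$ ($f(\ell)\subset\ell$), all of whose fixed points are isolated and simple. Then any three of the four fixed points of $f$ not lying on $\ell$ are not collinear.
   Context: A holomorphic quadratic self-map of $\mathbb{P}^2$ is given by three quadratic homogeneous polynomials without common nontrivial zeros; such a map with invariant line $\ell$ and isolated simple fixed points has exactly seven fixed points, three on $\ell$ and four off $\ell$. *)

(* Defs.v *)
(* Projective plane P^2 over an algebraically closed field
   F of characteristic 0 (numClosedFieldType), points given by nonzero
   homogeneous coordinate vectors in 'rV[F]_3. *)
From HB Require Import structures.
From mathcomp Require Import all_boot all_order all_algebra.
Set Implicit Arguments. Unset Strict Implicit. Unset Printing Implicit Defensive.
Import Order.TTheory GRing.Theory Num.Theory.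
Local Open Scope ring_scope.

Section Defs.
Variable F : numClosedFieldType.

(* A quadratic homogeneous polynomial in x0,x1,x2 is given by its coefficient
   row c on the monomials x0^2, x1^2, x2^2, x0x1, x0x2, x1x2. *)
Definition qform (c : 'rV[F]_6) (v : 'rV[F]_3) : F :=
  c 0 0 * v 0 0 ^+ 2 + c 0 1 * v 0 1 ^+ 2 + c 0 2 * v 0 2 ^+ 2
  + c 0 3 * (v 0 0 * v 0 1) + c 0 4 * (v 0 0 * v 0 2) + c 0 5 * (v 0 1 * v 0 2).

(* Directional derivative of qform c at v in direction w. *)
Definition dqform (c : 'rV[F]_6) (v w : 'rV[F]_3) : F :=
  c 0 0 * (2 * v 0 0 * w 0 0) + c 0 1 * (2 * v 0 1 * w 0 1)
  + c 0 2 * (2 * v 0 2 * w 0 2)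
  + c 0 3 * (v 0 0 * w 0 1 + w 0 0 * v 0 1)
  + c 0 4 * (v 0 0 * w 0 2 + w 0 0 * v 0 2)
  + c 0 5 * (v 0 1 * w 0 2 + w 0 1 * v 0 2).

Definition qmap (Q : 'M[F]_(3, 6)) (v : 'rV[F]_3) : 'rV[F]_3 :=
  \row_i qform (row i Q) v.

Definition dqmap (Q : 'M[F]_(3, 6)) (v w : 'rV[F]_3) : 'rV[F]_3 :=
  \row_i dqform (row i Q) v w.

(* Q defines a holomorphic self-map of P^2: no common nontrivial zero. *)
Definition holo_map (Q : 'M[F]_(3, 6)) : Prop :=
  forall v, qmap Q v = 0 -> v = 0.

Definition same_point (p q : 'rV[F]_3) : Prop := exists c : F, q = c *: p.

Definition on_line (a v : 'rV[F]_3) : Prop := \sum_(i < 3) a 0 i * v 0 i = 0.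

Definition invariant_line (Q : 'M[F]_(3, 6)) (a : 'rV[F]_3) : Prop :=
  a != 0 /\ forall v, v != 0 -> on_line a v -> on_line a (qmap Q v).

Definition fixed_point (Q : 'M[F]_(3, 6)) (p : 'rV[F]_3) : Prop :=
  p != 0 /\ exists lam : F, qmap Q p = lam *: p.

(* [p] is a simple fixed point: 1 is not an eigenvalue of the differential of
   f at [p] on the tangent space T_[p]P^2 = F^3 / <p>.  With f(p) = lam p,
   that differential is w mod p |-> (Df(p) w)/lam mod p. *)
Definition simple_fixed_point (Q : 'M[F]_(3, 6)) (p : 'rV[F]_3) : Prop :=
  p != 0 /\ exists lam : F, qmap Q p = lam *: p /\
    forall w (mu : F), dqmap Q p w - lam *: w = mu *: p -> same_point p w.

(* All fixed points are isolated: the fixed point set in P^2 is finite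
   (for the algebraic fixed-point set this is equivalent). *)
Definition fixed_points_isolated (Q : 'M[F]_(3, 6)) : Prop :=
  exists s : seq 'rV[F]_3,
    forall p, fixed_point Q p -> exists2 q, q \in s & same_point q p.

Definition collinear (p q r : 'rV[F]_3) : Prop :=
  exists a : 'rV[F]_3, [/\ a != 0, on_line a p, on_line a q & on_line a r].

End Defs.

(* Main.v *)
Require Import Defs.
From HB Require Import structures.
From mathcomp Require Import all_boot all_order all_algebra.
From mathcomp Require Import ring.
Import Order.TTheory GRing.Theory Num.Theory.
Local Open Scope ring_scope.

Section Aux.
Variable F : numClosedFieldType.

Definition dot (a v : 'rV[F]_3) : F := \sum_(i < 3) a 0 i * v 0 i.

Lemma dot_comb a (x y : F) p q : dot a (x *: p + y *: q) = x * dot a p + y * dot a q.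
Proof.
rewrite /dot !mulr_sumr -big_split; apply: eq_bigr => i _; rewrite !mxE /=; ring.
Qed.

Lemma qmap_comb (Q : 'M[F]_(3,6)) (x y : F) p q :
  qmap Q (x *: p + y *: q) =
  (x ^+ 2) *: qmap Q p + (y ^+ 2) *: qmap Q q + (x * y) *: dqmap Q p q.
Proof.
apply/rowP => i; rewrite !mxE /qform /dqform !mxE. ring.
Qed.

Lemma indep (p q : 'rV[F]_3) (x y : F) : p != 0 -> ~ same_point p q ->
  x *: p + y *: q = 0 -> x = 0 /\ y = 0.
Proof.
move=> p0 npq H.
have y0 : y = 0.
  apply/eqP; apply/negPn/negP => y0; apply: npq; exists (- x / y).
  apply/rowP => j; have := congr1 (fun v : 'rV[F]_3 => v 0 j) H; rewrite !mxE => e.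
  apply: (mulfI y0).
  rewrite (_ : y * q 0 j = - (x * p 0 j)); last by rewrite -[RHS]add0r -e; ring.
  by field.
split => //; move: H; rewrite y0 scale0r addr0 => /eqP.
by rewrite scaler_eq0 (negPf p0) orbF => /eqP.
Qed.

End Aux.
Arguments dot {F}.

Lemma coll_comb (F : numClosedFieldType) (p q r : 'rV[F]_3) :
  p != 0 -> ~ same_point p q -> collinear p q r ->
  exists al be : F, r = al *: p + be *: q.
Proof.
move=> p0 npq [b [b0 bp bq br]].
pose M : 'M[F]_3 := \matrix_(i < 3, j < 3) ([:: p 0 j; q 0 j; r 0 j]`_i).
have dM : \det M = 0.
  rewrite -det_tr; apply/eqP/det0P; exists b => //.
  apply/rowP => i; rewrite !mxE.
  case: i => [[|[|[|i]]] Hi]; rewrite /=; last by [].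
  1: by move: bp; rewrite /on_line => H; rewrite -[RHS]H; apply: eq_bigr => j _; rewrite !mxE.
  1: by move: bq; rewrite /on_line => H; rewrite -[RHS]H; apply: eq_bigr => j _; rewrite !mxE.
  1: by move: br; rewrite /on_line => H; rewrite -[RHS]H; apply: eq_bigr => j _; rewrite !mxE.
move/eqP/det0P: dM => [v v0 hv].
have hc : forall j, v 0 0 * p 0 j + v 0 1 * q 0 j + v 0 2%:R * r 0 j = 0.
  move=> j; have := congr1 (fun w : 'rV[F]_3 => w 0 j) hv.
  rewrite !mxE !big_ord_recr big_ord0 /= !mxE /= add0r => <-.
  by congr (_ * _ + _ * _ + _ * _); congr (v 0 _); apply/val_inj.
have [v2|v2] := eqVneq (v 0 2%:R) 0.
  have : v 0 0 *: p + v 0 1 *: q = 0.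
    apply/rowP => j; have := hc j; rewrite v2 !mxE mul0r addr0 => ->; by [].
  move/(@indep _ _ _ _ _ p0 npq) => [e0 e1].
  case/eqP: v0; apply/rowP => i; rewrite mxE.
  case: i => [[|[|[|i]]] Hi]; last by [].
  - by rewrite -[RHS]e0; congr (v 0 _); apply/val_inj.
  - by rewrite -[RHS]e1; congr (v 0 _); apply/val_inj.
  - by rewrite -[RHS]v2; congr (v 0 _); apply/val_inj.
exists (- v 0 0 / v 0 2%:R), (- v 0 1 / v 0 2%:R).
apply/rowP => j; rewrite !mxE.
apply: (mulfI v2).
rewrite (_ : v 0 2%:R * r 0 j = - (v 0 0 * p 0 j + v 0 1 * q 0 j)).
  by field.
by rewrite -[RHS]add0r -(hc j); ring.
Qed.

Theorem mainTheorem7 (F : numClosedFieldType) (Q : 'M[F]_(3, 6)) (a : 'rV[F]_3) :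
  holo_map Q ->
  invariant_line Q a ->
  fixed_points_isolated Q ->
  (forall p, fixed_point Q p -> simple_fixed_point Q p) ->
  forall p q r : 'rV[F]_3,
    fixed_point Q p -> fixed_point Q q -> fixed_point Q r ->
    ~ on_line a p -> ~ on_line a q -> ~ on_line a r ->
    ~ same_point p q -> ~ same_point p r -> ~ same_point q r ->
    ~ collinear p q r.
Proof.
move=> Hholo [a0 Hinv] _ _ p q r [p0 [lam Hp]] [q0 [mu Hq]] [r0 [nu Hr]]
  np nq nr npq npr nqr Hcol.
have [al [be er]] := @coll_comb _ _ _ _ p0 npq Hcol.
subst r.
have al0 : al != 0.
  apply/negP => /eqP al0; apply: nqr; exists be.
  by rewrite al0 scale0r add0r.
have be0 : be != 0.
  apply/negP => /eqP be0; apply: npr; exists al.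
  by rewrite be0 scale0r addr0.
pose c1 := (nu - al * lam) / be.
pose c2 := (nu - be * mu) / al.
have HB : dqmap Q p q = c1 *: p + c2 *: q.
  have := Hr; rewrite qmap_comb Hp Hq; move: (dqmap Q p q) => B Hr'.
  apply/rowP => j; have := congr1 (fun w : 'rV[F]_3 => w 0 j) Hr'.
  rewrite !mxE /= => e.
  have ab0 : al * be != 0 by rewrite mulf_neq0.
  apply: (mulfI ab0).
  rewrite (_ : al * be * B 0 j = nu * (al * p 0 j + be * q 0 j)
      - al ^+ 2 * (lam * p 0 j) - be ^+ 2 * (mu * q 0 j)).
    by rewrite /c1 /c2 /=; field; rewrite al0 be0.
  have -> : nu * (al * p 0 j + be * q 0 j) = al ^+ 2 * (lam * p 0 j)
     + be ^+ 2 * (mu * q 0 j) + al * be * B 0 j by exact: (esym e).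
  ring.
have Hf : forall x y : F, qmap Q (x *: p + y *: q) =
    (x ^+ 2 * lam + x * y * c1) *: p + (y ^+ 2 * mu + x * y * c2) *: q.
  move=> x y; rewrite qmap_comb Hp Hq HB; apply/rowP => j; rewrite !mxE; ring.
pose P := dot a p. pose Qq := dot a q.
have P0 : P != 0 by apply/eqP.
have Qq0 : Qq != 0 by apply/eqP.
pose s := Qq *: p + (- P) *: q.
have s0 : s != 0.
  apply/eqP => /(@indep _ _ _ _ _ p0 npq) [e _]; by move/eqP: Qq0.
have Hs : on_line a s by rewrite /on_line -/(dot a s) dot_comb /P /Qq; ring.
have := Hinv s s0 Hs; rewrite /on_line -/(dot a _) Hf dot_comb -/P -/Qq => Hfs.
have D0 : (lam - c2) * Qq + (c1 - mu) * (- P) = 0.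
  have : P * Qq * ((lam - c2) * Qq + (c1 - mu) * (- P)) = 0
    by rewrite -[RHS]Hfs; ring.
  by move/eqP; rewrite !mulf_eq0 (negPf P0) (negPf Qq0) /= => /eqP.
have Dr : (lam - c2) * al + (c1 - mu) * be = 0 by rewrite /c1 /c2 /=; field; rewrite ?al0 ?be0.
have det0 : al * (- P) - be * Qq != 0.
  apply/negP => /eqP e; apply: nr.
  rewrite /on_line -/(dot a _) dot_comb -/P -/Qq.
  by rewrite -[RHS]oppr0 -e; ring.
have d1 : lam - c2 = 0.
  have : (lam - c2) * (al * (- P) - be * Qq) = 0.
    have -> : (lam - c2) * (al * (- P) - be * Qq) = (- P) * ((lam - c2) * al + (c1 - mu) * be) - be * ((lam - c2) * Qq + (c1 - mu) * (- P)) by ring.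
    by rewrite Dr D0 !mulr0 subr0.
  by move/eqP; rewrite mulf_eq0 (negPf det0) orbF => /eqP.
have d2 : c1 - mu = 0.
  have : (c1 - mu) * (al * (- P) - be * Qq) = 0.
    have -> : (c1 - mu) * (al * (- P) - be * Qq) = al * ((lam - c2) * Qq + (c1 - mu) * (- P)) - Qq * ((lam - c2) * al + (c1 - mu) * be) by ring.
    by rewrite Dr D0 !mulr0 subr0.
  by move/eqP; rewrite mulf_eq0 (negPf det0) orbF => /eqP.
have ec2 : c2 = lam by apply/eqP; rewrite eq_sym -subr_eq0 d1.
have ec1 : c1 = mu by apply/eqP; rewrite -subr_eq0 d2.
have Hx : qmap Q (mu *: p + (- lam) *: q) = 0.
  rewrite Hf ec1 ec2; apply/rowP => j; rewrite !mxE; ring.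
have [_ l0] := @indep _ _ _ _ _ p0 npq (Hholo _ Hx).
have : qmap Q p = 0 by rewrite Hp -(opprK lam) l0 oppr0 scale0r.
by move/Hholo/eqP; rewrite (negPf p0).
Qed.
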